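(* Let $M\subseteq\mathbb{R}^n$ be convex, $D\subseteq\mathbb{R}^n$ discrete, and $F=F_{\mathrm{QC}^n,M\cap D}$. Then $\tau_F\ge |M\cap D|-1$.
   Context: $\mathrm{QC}^n$: quasiconvex functions $f$ with convex domain in $\mathbb{R}^n$, i.e. $f(z)\le\max\{f(x),f(y)\}$ for all $x,y\in\mathrm{dom}(f)$ and $z\in(x,y)$. For a class $\mathscr{F}$ and discrete set $D'$, the problem $F=F_{\mathscr{F},D'}$ has instances $\mathrm{dom}(F)=\{f\in\mathscr{F}: D'\subseteq\mathrm{dom}(f)\}$ and asks for a point of $\arg\min_{x\in D'}f(x)$, where $f$ is accessible only through the comparison oracle answering, for $x,y\in\mathrm{dom}(f)$, whether $f(x)\le f(y)$. An algorithm is a binary decision tree whose internal nodes are comparison queries on pairs of points and whose leaves are labelled by points; it solves $F$ if for every $f\in\mathrm{dom}(F)$ all queried points lie in $\mathrm{dom}(f)$ and the reached leaf is labelled by a point of $\arg\min_{D'}f$. $\tau_F$ is the minimum, over all algorithms solving $F$, of the maximal number of queries on a root-to-leaf path (worst-case number of oracle calls). *)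

(* Defs.v *)
From Stdlib Require Fin.
From Stdlib Require Import Reals List.
Open Scope R_scope.

Definition pt (n : nat) : Type := Fin.t n -> R.

Definition comb {n : nat} (t : R) (x y : pt n) : pt n :=
  fun i => (1 - t) * x i + t * y i.

Definition convex_set {n : nat} (C : pt n -> Prop) : Prop :=
  forall x y t, C x -> C y -> 0 <= t <= 1 -> C (comb t x y).

(* Discrete: every point of D is isolated in D (sup-norm balls, which
   generate the usual topology of R^n). *)
Definition discrete_set {n : nat} (D : pt n -> Prop) : Prop :=
  forall x, D x -> exists eps, 0 < eps /\
    forall y, D y -> (forall i, Rabs (y i - x i) < eps) -> y = x.

(* A function with domain: its domain [dom] and values [f] (values outside
   [dom] are irrelevant). *)
Record fn (n : nat) := mkFn { dom : pt n -> Prop; val : pt n -> R }.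
Arguments dom {n}. Arguments val {n}.

Definition quasiconvex {n : nat} (f : fn n) : Prop :=
  convex_set (dom f) /\
  forall x y t, dom f x -> dom f y -> 0 < t < 1 ->
    val f (comb t x y) <= Rmax (val f x) (val f y).

(* Comparison-oracle algorithms: binary decision trees. [Node x y l r] asks
   whether f(x) <= f(y); on "yes" it continues with [l], else with [r]. *)
Inductive dtree (n : nat) : Type :=
| Leaf : pt n -> dtree n
| Node : pt n -> pt n -> dtree n -> dtree n -> dtree n.
Arguments Leaf {n}. Arguments Node {n}.

Fixpoint depth {n : nat} (T : dtree n) : nat :=
  match T with
  | Leaf _ => 0
  | Node _ _ l r => S (Nat.max (depth l) (depth r))
  end.

Fixpoint run_ok {n : nat} (f : fn n) (D' : pt n -> Prop) (T : dtree n) : Prop :=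
  match T with
  | Leaf p => D' p /\ forall z, D' z -> val f p <= val f z
  | Node x y l r =>
      dom f x /\ dom f y /\
      match Rle_dec (val f x) (val f y) with
      | left _ => run_ok f D' l
      | right _ => run_ok f D' r
      end
  end.

Definition solves_QC {n : nat} (D' : pt n -> Prop) (T : dtree n) : Prop :=
  forall f : fn n, quasiconvex f -> (forall x, D' x -> dom f x) -> run_ok f D' T.

(* Main.v *)
Require Import Defs.
From Stdlib Require Import Reals List.
From Stdlib Require Import Lra Lia ClassicalDescription FunctionalExtensionality.

Fixpoint lspine {n : nat} (T : dtree n) : list (pt n) :=
  match T with
  | Leaf p => p :: nil
  | Node _ y l _ => y :: lspine l
  end.

Lemma lspine_len {n : nat} (T : dtree n) : (length (lspine T) <= S (depth T))%nat.
Proof.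
  induction T; simpl; [lia|]. 
  pose proof (Nat.le_max_l (depth T1) (depth T2)). lia.
Qed.

Definition fp {n : nat} (M : pt n -> Prop) (p : pt n) : fn n :=
  mkFn n M (fun z => if excluded_middle_informative (z = p) then 0 else 1).

Lemma fp_val01 {n : nat} M (p z : pt n) : 0 <= val (fp M p) z <= 1.
Proof. simpl. destruct (excluded_middle_informative (z = p)); lra. Qed.

Lemma comb_same {n : nat} t (p : pt n) : comb t p p = p.
Proof. apply functional_extensionality; intro i; unfold comb; ring. Qed.

Lemma fp_qc {n : nat} (M : pt n -> Prop) p : convex_set M -> quasiconvex (fp M p).
Proof.
  intros HM; split; [exact HM|].
  intros x y t _ _ Ht.
  pose proof (fp_val01 M p x). pose proof (fp_val01 M p y).
  simpl. destruct (excluded_middle_informative (comb t x y = p)).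
  - unfold Rmax; destruct Rle_dec; simpl in *; lra.
  - destruct (excluded_middle_informative (x = p)); destruct (excluded_middle_informative (y = p)).
    + subst. rewrite comb_same in n0. congruence.
    + rewrite Rmax_right; lra.
    + rewrite Rmax_left; lra.
    + rewrite Rmax_left; lra.
Qed.

Lemma spine_in {n : nat} (M D' : pt n -> Prop) p (T : dtree n) :
  D' p -> run_ok (fp M p) D' T -> In p (lspine T).
Proof.
  intros Hp; induction T as [q|x y l IHl r IHr]; simpl.
  - intros [_ H]. specialize (H p Hp). simpl in H.
    destruct (excluded_middle_informative (q = p)); [left; auto|].
    destruct (excluded_middle_informative (p = p)); [lra|congruence].
  - intros [_ [_ H]].
    destruct (excluded_middle_informative (y = p)) as [e|ne]; [left; auto|right].
    apply IHl.
    pose proof (fp_val01 M p x). simpl in *.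
    destruct (Rle_dec _ _) as [|c]; [exact H|].
    exfalso; apply c; lra.
Qed.

Theorem mainTheorem8 (n : nat) (M D : pt n -> Prop) :
  convex_set M -> discrete_set D ->
  forall (pts : list (pt n)), NoDup pts ->
    (forall p, In p pts -> M p /\ D p) ->
  forall T : dtree n, solves_QC (fun x => M x /\ D x) T ->
    (length pts - 1 <= depth T)%nat.
Proof.
  intros HM _ pts Hnd Hpts T HT.
  assert (incl pts (lspine T)).
  { intros p Hp. apply (spine_in M (fun x => M x /\ D x)); [auto|].
    apply HT; [apply fp_qc; auto|]. intros x [Hx _]; exact Hx. }
  pose proof (NoDup_incl_length Hnd H). pose proof (lspine_len T). lia.
Qed.
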